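(* Let $K$ be a field, $P=K[x_1,\dots,x_n]$, $\sigma$ a term ordering on $\mathbb{T}^n$, and let $I,J$ be ideals in $P$. If $I\subsetneq J$ then $O_\sigma(J)\prec_\sigma O_\sigma(I)$.
   Context: $\mathbb{T}^n$ is the monoid of power-products in $x_1,\dots,x_n$. A tuple $(t_1,\dots,t_r)$ of distinct power-products is $\sigma$-ordered if $t_1<_\sigma\cdots<_\sigma t_r$ (the empty tuple is $\sigma$-ordered). For an ideal $I$, $O_\sigma(I)$ is the $\sigma$-ordered tuple of the leading terms of a minimal $\sigma$-Gröbner basis of $I$ (equivalently, the minimal power-product generators of $\mathrm{LT}_\sigma(I)$ in increasing $\sigma$-order); it is the empty tuple if $I=0$. For $\sigma$-ordered tuples $T=(t_1,\dots,t_r)$ and $T'=(t'_1,\dots,t'_{r'})$, $T'\prec_\sigma T$ means either $T$ is a proper prefix of $T'$ (i.e. $r<r'$ and $t_i=t'_i$ for $i\le r$), or there is $k\le\min(r,r')$ with $t_i=t'_i$ for $i<k$ and $t'_k<_\sigma t_k$. *)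

(* Defs.v *)
From HB Require Import structures.
From mathcomp Require Import all_boot all_order all_algebra.
From mathcomp Require Import mpoly.
From Stdlib Require Import ClassicalEpsilon.

Set Implicit Arguments.
Unset Strict Implicit.
Unset Printing Implicit Defensive.

Import Order.TTheory GRing.Theory.
Local Open Scope ring_scope.

Section Groebner.
Variable n : nat.
Local Notation mon := ('X_{1..n}).

(* A term ordering sigma on T^n, given as its (reflexive) "<=_sigma" relation:
   a total order on power-products, compatible with multiplication
   (= addition of exponent vectors) and with 1 (= 0%MM) as least element. *)
Definition term_order (le : rel mon) : Prop :=
  (forall m, le m m) /\
  (forall m1 m2, le m1 m2 -> le m2 m1 -> m1 = m2) /\
  (forall m1 m2 m3, le m1 m2 -> le m2 m3 -> le m1 m3) /\
  (forall m1 m2, le m1 m2 || le m2 m1) /\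
  (forall m1 m2 m3, le m1 m2 -> le (m1 + m3)%MM (m2 + m3)%MM) /\
  (forall m, le 0%MM m).

Definition term_lt (le : rel mon) (m1 m2 : mon) : bool := le m1 m2 && (m1 != m2).

Variable K : fieldType.

Definition is_ideal (I : {mpoly K[n]} -> Prop) : Prop :=
  [/\ I 0,
      (forall f g, I f -> I g -> I (f + g))
    & (forall p f, I f -> I (p * f))].

Definition is_LT (le : rel mon) (f : {mpoly K[n]}) (m : mon) : Prop :=
  m \in msupp f /\ forall m', m' \in msupp f -> le m' m.

(* m is the leading term of some nonzero element of I, i.e. a power-product
   of LT_sigma(I) (the set of leading terms is already closed under
   multiplication by power-products when I is an ideal). *)
Definition in_LTset (le : rel mon) (I : {mpoly K[n]} -> Prop) (m : mon) : Prop :=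
  exists f, [/\ I f, f != 0 & is_LT le f m].

Definition min_gen (le : rel mon) (I : {mpoly K[n]} -> Prop) (m : mon) : Prop :=
  in_LTset le I m /\
  forall m', in_LTset le I m' -> (m' <= m)%MM -> m' = m.

Definition is_O (le : rel mon) (I : {mpoly K[n]} -> Prop) (s : seq mon) : Prop :=
  sorted (term_lt le) s /\ (forall m, m \in s <-> min_gen le I m).

(* O_sigma(I): the (unique, by Dickson's lemma) such tuple, chosen by
   classical description. *)
Definition O_sigma (le : rel mon) (I : {mpoly K[n]} -> Prop) : seq mon :=
  epsilon (inhabits [::]) (is_O le I).

End Groebner.

Definition tuple_prec (n : nat) (le : rel 'X_{1..n}) (T' T : seq 'X_{1..n}) : Prop :=
  (size T < size T' /\ forall i, i < size T -> nth 0%MM T i = nth 0%MM T' i)%N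
  \/ exists k, [/\ (k < minn (size T) (size T'))%N,
                  (forall i, i < k -> nth 0%MM T i = nth 0%MM T' i)%N
                & term_lt le (nth 0%MM T' k) (nth 0%MM T k)].

(* Main.v *)
Require Import Defs.
From mathcomp Require Import all_boot all_order all_algebra.
From mathcomp Require Import mpoly.
From Stdlib Require Import Classical ClassicalEpsilon.

Set Implicit Arguments.
Unset Strict Implicit.
Unset Printing Implicit Defensive.



Lemma min_after (g : nat -> nat) (N : nat) :
  exists j, N <= j /\ forall i, N <= i -> g j <= g i.
Proof.
suff H : forall v, (exists i, N <= i /\ g i <= v) ->
   exists j, N <= j /\ forall i, N <= i -> g j <= g i.
  by apply: (H (g N)); exists N.
elim=> [|v IH].
  case=> i [Ni gi]; exists i; split=> // i' _; move: gi; rewrite leqn0 => /eqP ->.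
  done.
case=> i [Ni gi].
case: (classic (exists i, N <= i /\ g i <= v)) => [h|h]; first exact: IH.
exists i; split=> // i' Ni'; apply: (leq_trans gi).
case: (leqP (g i') v) => [hh|//]; by exfalso; apply: h; exists i'.
Qed.

Lemma nat_subseq (g : nat -> nat) : exists phi : nat -> nat,
  (forall i, phi i < phi i.+1) /\ (forall i, g (phi i) <= g (phi i.+1)).
Proof.
pose mn N := proj1_sig (constructive_indefinite_description _ (min_after g N)).
have mnP N : N <= mn N /\ forall i, N <= i -> g (mn N) <= g i.
  by rewrite /mn; case: constructive_indefinite_description.
pose phi := fix phi i := if i is k.+1 then mn (phi k).+1 else mn 0.
exists phi; split=> [i|]; first by case: (mnP (phi i).+1).
case=> [|k] /=; first by apply: (mnP 0).2.
apply: (mnP (phi k).+1).2.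
have h1 := (mnP (phi k).+1).1.
have h2 := (mnP (mn (phi k).+1).+1).1.
by apply: leq_trans h2; apply: leq_trans (leqnSn _).
Qed.

Section Dickson.
Variable n : nat.

Lemma dickson_k k : forall f : nat -> 'X_{1..n}, exists phi : nat -> nat,
  (forall i, phi i < phi i.+1) /\
  forall i1 i2, i1 <= i2 -> forall j : 'I_n, j < k -> f (phi i1) j <= f (phi i2) j.
Proof.
elim: k => [|k IH] f.
  by exists id; split.
have [phi [phiI phiM]] := IH f.
case: (ltnP k n) => kn; last first.
  exists phi; split=> // i1 i2 le12 j jk; apply: phiM => //.
  by apply: leq_trans (ltn_ord j) kn.
pose j0 : 'I_n := Ordinal kn.
have [psi [psiI psiM]] := nat_subseq (fun i => f (phi i) j0).
exists (fun i => phi (psi i)); split.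
  have hp := @homo_ltn _ phi (fun a b => a < b) (fun y x z => @ltn_trans y x z) phiI.
  by move=> i; apply: hp.
move=> i1 i2 le12 j; rewrite ltnS leq_eqVlt => /orP [/eqP ejk|jk].
  have -> : j = j0 by apply: val_inj.
  have hp := @homo_leq _ (fun i => f (phi (psi i)) j0) (fun a b => a <= b)
     leqnn (fun y x z => @leq_trans y x z) psiM.
  by apply: hp.
apply: phiM => //.
have hp := @homo_leq _ psi (fun a b => a <= b)
     leqnn (fun y x z => @leq_trans y x z) (fun i => ltnW (psiI i)).
by apply: hp.
Qed.

Lemma dickson (f : nat -> 'X_{1..n}) : exists i j, i < j /\ (f i <= f j)%MM.
Proof.
have [phi [phiI phiM]] := dickson_k n f.
exists (phi 0), (phi 1); split => //.
apply/mnm_lepP => j; apply: phiM => //.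
Qed.
End Dickson.



Section Order.
Variable n : nat.
Local Notation mon := ('X_{1..n}).
Variable le : rel mon.
Hypothesis hto : term_order le.

Let le_refl : forall m, le m m. Proof. by case: hto. Qed.
Let le_anti : forall m1 m2, le m1 m2 -> le m2 m1 -> m1 = m2.
Proof. by case: hto => _ []. Qed.
Let le_trans : forall m1 m2 m3, le m1 m2 -> le m2 m3 -> le m1 m3.
Proof. by case: hto => _ [] _ []. Qed.
Let le_total : forall m1 m2, le m1 m2 || le m2 m1.
Proof. by case: hto => _ [] _ [] _ []. Qed.
Let le_add : forall m1 m2 m3, le m1 m2 -> le (m1 + m3)%MM (m2 + m3)%MM.
Proof. by case: hto => _ [] _ [] _ [] _ []. Qed.
Let le_0 : forall m, le 0%MM m.
Proof. by case: hto => _ [] _ [] _ [] _ []. Qed.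

Lemma div_le m1 m2 : (m1 <= m2)%MM -> le m1 m2.
Proof.
move=> h; have := le_add m1 (le_0 (m2 - m1)%MM).
by rewrite add0m submK.
Qed.

Lemma lt_trans m1 m2 m3 : term_lt le m1 m2 -> term_lt le m2 m3 -> term_lt le m1 m3.
Proof.
rewrite /term_lt => /andP [a b] /andP [c d]; rewrite (le_trans a c) /=.
apply/eqP => e; subst m3; have := le_anti a c; move/eqP: b; done.
Qed.

Lemma lt_le_false m1 m2 : term_lt le m1 m2 -> le m2 m1 -> False.
Proof.
by case/andP => a /eqP b c; apply: b; apply: le_anti.
Qed.

Lemma le_lt_total m1 m2 : m1 != m2 -> term_lt le m1 m2 || term_lt le m2 m1.
Proof.
move=> ne; rewrite /term_lt ne eq_sym ne !andbT; exact: le_total.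
Qed.

Lemma wf_min (P : mon -> Prop) m0 : P m0 ->
  exists m, P m /\ forall m', P m' -> le m m'.
Proof.
move=> Pm0; apply: NNPP => H.
have step : forall m, P m -> exists m', P m' /\ term_lt le m' m.
  move=> m Pm; apply: NNPP => H2; apply: H; exists m; split => // m' Pm'.
  case/orP: (le_total m m') => // h; apply: NNPP => h3; apply: H2.
  exists m'; split => //; rewrite /term_lt h /=; apply/eqP => e; subst m'.
  by apply: h3.
pose nx m := epsilon (inhabits m0) (fun m' => P m' /\ term_lt le m' m).
pose f i := iter i nx m0.
have fP : forall i, P (f i) /\ term_lt le (f i.+1) (f i).
  elim=> [|i [IH _]].
    split => //; exact: (epsilon_spec (inhabits m0) _ (step _ Pm0)).2.
  have [h1 h2] := epsilon_spec (inhabits m0) _ (step _ IH).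
  split => //; exact: (epsilon_spec (inhabits m0) _ (step _ h1)).2.
have [i [j [ij dij]]] := dickson f.
have hom := @homo_ltn _ f (fun a b => term_lt le b a)
   (fun y x z h1 h2 => lt_trans h2 h1) (fun i => (fP i).2).
exact: (lt_le_false (hom _ _ ij) (div_le dij)).
Qed.

Definition mingen (L : mon -> Prop) m :=
  L m /\ forall m', L m' -> (m' <= m)%MM -> m' = m.

Lemma mingen_below (L : mon -> Prop) m : L m ->
  exists h, mingen L h /\ (h <= m)%MM.
Proof.
move=> Lm.
have [h [[Lh hm] hmin]] := wf_min (P := fun x => L x /\ (x <= m)%MM) (conj Lm (lepm_refl m)).
exists h; split => //; split => // m' Lm' m'h.
apply: le_anti; first exact: div_le.
apply: hmin; split => //; exact: lepm_trans m'h hm.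
Qed.

Lemma filter_ex (S : mon -> Prop) (l : seq mon) :
  exists l' : seq mon, forall m, m \in l' <-> (m \in l /\ S m).
Proof.
elim: l => [|a l [l' IH]]; first by exists [::] => m; split => // [[]].
case: (classic (S a)) => Sa.
  exists (a :: l') => m; rewrite !inE; split.
    by case/orP => [/eqP -> | /IH [h1 h2]]; rewrite ?eqxx ?h1 ?orbT.
  by case=> /orP [/eqP -> | h] Sm; rewrite ?eqxx // (proj2 (IH m)) ?orbT.
exists l' => m; rewrite inE; split.
  by move/IH => [h1 h2]; rewrite h1 orbT.
case=> /orP [/eqP -> // | h] Sm; exact/IH.
Qed.

Lemma mingen_finite (L : mon -> Prop) :
  exists l : seq mon, forall m, m \in l <-> mingen L m.
Proof.
apply: NNPP => H.
have step : forall l : seq mon, exists m, mingen L m /\ m \notin l.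
  move=> l; apply: NNPP => H2; apply: H.
  have [l' Hl'] := filter_ex (mingen L) l.
  exists l' => m; rewrite Hl'; split; first by case.
  move=> hm; split => //; apply: NNPP => hn; apply: H2; exists m; split => //.
  by apply/negP.
pose nx (l : seq mon) := epsilon (inhabits 0%MM) (fun m => mingen L m /\ m \notin l).
pose F := fix F i := if i is k.+1 then nx (F k) :: F k else [::].
pose f i := nx (F i).
have fP i : mingen L (f i) /\ f i \notin F i.
  exact: (epsilon_spec (inhabits 0%MM) _ (step (F i))).
have fin : forall i j, i < j -> f i \in F j.
  move=> i; elim=> // j IH; rewrite ltnS leq_eqVlt => /orP [/eqP -> | h].
    by rewrite /= inE eqxx.
  by rewrite /= inE (IH h) orbT.
have [i [j [ij dij]]] := dickson f.
have [[Li _] _] := fP i; have [[_ minj] nj] := fP j.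
have e := minj _ Li dij.
by move: nj; rewrite -e fin.
Qed.

Lemma path_lt x s : path le x s -> uniq (x :: s) -> path (term_lt le) x s.
Proof.
elim: s x => // y s IH x /= /andP [lxy p] /andP [nx u].
rewrite /term_lt lxy /=; apply/andP; split.
  by apply: contra nx => /eqP ->; rewrite inE eqxx.
exact: IH.
Qed.

Lemma O_exists (L : mon -> Prop) :
  exists s : seq mon, sorted (term_lt le) s /\ forall m, m \in s <-> mingen L m.
Proof.
have [l Hl] := mingen_finite L.
exists (sort le (undup l)); split.
  have : sorted le (sort le (undup l)) by apply: sort_sorted.
  have : uniq (sort le (undup l)) by rewrite sort_uniq undup_uniq.
  case: (sort le (undup l)) => //= x s u p; exact: path_lt.
by move=> m; rewrite mem_sort mem_undup.
Qed.

End Order.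



Section Comb.
Variable n : nat.
Local Notation mon := ('X_{1..n}).
Variable le : rel mon.
Hypothesis hto : term_order le.

Lemma comb (G H : seq mon) :
  sorted (term_lt le) G -> sorted (term_lt le) H ->
  (forall g, g \in G -> exists2 h, h \in H & (h <= g)%MM) ->
  (forall g g', g \in G -> g' \in G -> (g <= g')%MM -> g = g') ->
  H <> G ->
  tuple_prec le H G.
Proof.
move=> sG sH cov minG neq.
have trT : transitive (term_lt le) by move=> y x z; apply: lt_trans.
have irr x : ~~ term_lt le x x by rewrite /term_lt eqxx andbF.
have noG : forall j k, (j < k)%N -> (k < size G)%N ->
    (nth 0%MM G j <= nth 0%MM G k)%MM -> False.
  move=> j k jk kG d.
  have jG : (j < size G)%N by apply: ltn_trans jk kG.
  have e := minG _ _ (mem_nth 0%MM jG) (mem_nth 0%MM kG) d.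
  have := sorted_ltn_nth trT 0%MM sG; move=> /(_ j k jG kG jk).
  by rewrite e (negbTE (irr _)).
have getH : forall k, (k < size G)%N -> exists j, [/\ (j < size H)%N,
    (nth 0%MM H j <= nth 0%MM G k)%MM & le (nth 0%MM H j) (nth 0%MM G k)].
  move=> k kG; have [h hH hg] := cov _ (mem_nth 0%MM kG).
  exists (index h H); rewrite index_mem nth_index //; split => //.
  exact: div_le.
case: (classic (exists k, (k < minn (size G) (size H))%N /\ nth 0%MM G k != nth 0%MM H k)).
  move=> ex.
  have ex' : exists k, ((k < minn (size G) (size H))%N && (nth 0%MM G k != nth 0%MM H k)).
    by case: ex => k [a b]; exists k; rewrite a b.
  case: (ex_minnP ex') => k /andP [km kne] kmin.
  have eqi : forall i, (i < k)%N -> nth 0%MM G i = nth 0%MM H i.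
    move=> i ik; apply/eqP; apply: contraT => hne.
    have : (k <= i)%N.
      by apply: kmin; rewrite hne andbT; apply: ltn_trans ik km.
    by rewrite leqNgt ik.
  have kG : (k < size G)%N by move: km; rewrite leq_min => /andP [].
  have kH : (k < size H)%N by move: km; rewrite leq_min => /andP [].
  case/orP: (le_lt_total hto kne) => [hlt|hlt].
    exfalso.
    have [j [jH dj lj]] := getH k kG.
    case: (ltngtP j k) => [jk|kj|ejk].
    - by apply: (noG j k jk kG); rewrite eqi.
    - have := sorted_ltn_nth trT 0%MM sH; move=> /(_ k j kH jH kj) hl.
      exact: (lt_le_false hto (lt_trans hto hlt hl) lj).
    - by subst j; exact: (lt_le_false hto hlt lj).
  right; exists k; split => //.
move=> nex.
have eqi : forall i, (i < minn (size G) (size H))%N -> nth 0%MM G i = nth 0%MM H i.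
  move=> i im; apply: NNPP => hne; apply: nex; exists i; split => //.
  by apply/eqP.
case: (ltngtP (size G) (size H)) => [lt|gt|eqs].
- left; split => // i iG; apply: eqi; rewrite leq_min iG /=.
  exact: ltn_trans iG lt.
- exfalso; have [j [jH dj _]] := getH (size H) gt.
  apply: (noG j (size H) jH gt); rewrite eqi //.
  by rewrite leq_min jH (ltn_trans jH gt).
- exfalso; apply: neq; apply: (@eq_from_nth _ 0%MM) => // i iH.
  by rewrite eqi // -eqs minnn eqs.
Qed.
End Comb.



Import GRing.Theory.

Section Alg.
Local Open Scope ring_scope.
Variable n : nat.
Local Notation mon := ('X_{1..n}).
Variable le : rel mon.
Hypothesis hto : term_order le.
Variable K : fieldType.

Let le_refl : forall m, le m m. Proof. by case: hto. Qed.
Let le_anti : forall m1 m2, le m1 m2 -> le m2 m1 -> m1 = m2.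
Proof. by case: hto => _ []. Qed.
Let le_trans : forall m1 m2 m3, le m1 m2 -> le m2 m3 -> le m1 m3.
Proof. by case: hto => _ [] _ []. Qed.
Let le_total : forall m1 m2, le m1 m2 || le m2 m1.
Proof. by case: hto => _ [] _ [] _ []. Qed.
Let le_add : forall m1 m2 m3, le m1 m2 -> le (m1 + m3)%MM (m2 + m3)%MM.
Proof. by case: hto => _ [] _ [] _ [] _ []. Qed.

Lemma seq_max (s : seq mon) : s != [::] ->
  exists m, m \in s /\ forall m', m' \in s -> le m' m.
Proof.
elim: s => // a s IH _.
case: (altP (s =P [::])) => [-> | ne].
  by exists a; split; rewrite ?inE ?eqxx // => m'; rewrite inE => /eqP ->.
have [m [ms mmax]] := IH ne.
case/orP: (le_total a m) => h.
  exists m; split; first by rewrite inE ms orbT.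
  by move=> m'; rewrite inE => /orP [/eqP -> | /mmax].
exists a; split; first by rewrite inE eqxx.
move=> m'; rewrite inE => /orP [/eqP -> // | /mmax hm]; exact: le_trans hm h.
Qed.

Lemma LT_exists (f : {mpoly K[n]}) : f != 0 -> exists m, is_LT le f m.
Proof.
move=> nz; have : msupp f != [::] by rewrite msupp_eq0.
by move/seq_max => [m [a b]]; exists m; split.
Qed.

Lemma LT_mul (I : {mpoly K[n]} -> Prop) m u :
  is_ideal I -> in_LTset le I m -> in_LTset le I (m + u)%MM.
Proof.
case=> I0 IA IM [f [If nz [fm fmax]]].
have pe := msuppMX f u.
have memg : forall x, (x \in msupp (f * 'X_[u])) = (x \in [seq (u + m')%MM | m' <- msupp f]).
  by move=> x; apply: perm_mem.
have mg : (m + u)%MM \in msupp (f * 'X_[u]).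
  by rewrite memg; apply/mapP; exists m => //; rewrite addmC.
exists (f * 'X_[u]); split.
- by rewrite mulrC; apply: IM.
- by apply: contraTneq mg => ->; rewrite msupp0.
split => // x; rewrite memg => /mapP [y yf ->].
by rewrite addmC; apply: le_add; apply: fmax.
Qed.

Lemma reduction (I J : {mpoly K[n]} -> Prop) :
  is_ideal I -> is_ideal J -> (forall f, I f -> J f) ->
  (forall m, in_LTset le J m -> in_LTset le I m) ->
  forall f, J f -> I f.
Proof.
move=> [I0 IA IM] [J0 JA JM] IJ LTJI f0 Jf0; apply: NNPP => nIf0.
have nz0 : f0 != 0 by apply/eqP => e; apply: nIf0; rewrite e.
have [m0 LT0] := LT_exists nz0.
have [m [[f [Jf nIf LTf]] mmin]] :=
  wf_min hto (P := fun m => exists f, [/\ J f, ~ I f & is_LT le f m])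
    (ex_intro _ f0 (And3 Jf0 nIf0 LT0)).
have nzf : f != 0 by apply/eqP => e; apply: nIf; rewrite e.
have [g [Ig nzg [gm gmax]]] := LTJI m (ex_intro _ f (And3 Jf nzf LTf)).
case: LTf => fm fmax.
pose c := f@_m / g@_m.
pose h := f + (- c)%:MP * g.
have Jh : J h by apply: JA => //; apply: JM; apply: IJ.
have nIh : ~ I h.
  move=> Ih; apply: nIf.
  have -> : f = h + c%:MP * g.
    by rewrite /h -addrA -mulrDl mpolyCN addNr mul0r addr0.
  by apply: IA => //; apply: IM.
have nzh : h != 0 by apply/eqP => e; apply: nIh; rewrite e.
have [m' [hm' hmax]] := LT_exists nzh.
have lem' : le m' m.
  move: hm'; rewrite mcoeff_msupp /h mcoeffD mcoeffCM.
  case: (altP (f@_m' =P 0)) => [f0'|fnz].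
    rewrite f0' add0r mulf_eq0 negb_or => /andP [_ gnz].
    by apply: gmax; rewrite mcoeff_msupp.
  by move=> _; apply: fmax; rewrite mcoeff_msupp.
have nem : m' != m.
  apply: contraTneq hm' => ->.
  have gnz : g@_m != 0 by rewrite -mcoeff_msupp.
  rewrite mcoeff_msupp negbK /h mcoeffD mcoeffCM /c.
  by rewrite mulNr divfK // subrr.
have := mmin m' (ex_intro _ h (And3 Jh nIh (conj hm' hmax))).
move=> lmm'; move/eqP: nem; apply; exact: le_anti.
Qed.

End Alg.

Unset Implicit Arguments.
Set Strict Implicit.
Set Printing Implicit Defensive.

Lemma O_spec (n : nat) (K : fieldType) (le : rel 'X_{1..n}) (I : {mpoly K[n]} -> Prop) :
  term_order le -> is_O le I (O_sigma le I).
Proof.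
move=> hto; rewrite /O_sigma; apply: epsilon_spec.
exact: (O_exists hto (in_LTset le I)).
Qed.

Theorem corollary4p9 (n : nat) (K : fieldType) (sigma : rel 'X_{1..n})
    (I J : {mpoly K[n]} -> Prop) :
  term_order sigma -> is_ideal I -> is_ideal J ->
  (forall f, I f -> J f) -> (exists f, J f /\ ~ I f) ->
  tuple_prec sigma (O_sigma sigma J) (O_sigma sigma I).
Proof.
move=> hto idI idJ IJ [f0 [Jf0 nIf0]].
have [sG HG] := @O_spec n K sigma I hto.
have [sH HH] := @O_spec n K sigma J hto.
have LTIJ : forall m, in_LTset sigma I m -> in_LTset sigma J m.
  by move=> m [f [If nz lt]]; exists f; split => //; apply: IJ.
apply: (comb hto sG sH).
- move=> g /HG [gI _].
  have [h [hmin hg]] := mingen_below hto (LTIJ _ gI).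
  by exists h => //; apply/HH.
- move=> g g' /HG [gI _] /HG [_ g'min] d; exact: g'min.
- move=> e; apply: nIf0; apply: (reduction hto idI idJ IJ) => // m mJ.
  have [h [hmin hm]] := mingen_below hto mJ.
  have : h \in O_sigma sigma J by apply/HH.
  rewrite e => /HG [hI _].
  have := @LT_mul n sigma hto K I h (m - h)%MM idI hI.
  by rewrite addmC submK.
Qed.
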